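(* Let $p\ge2$ and let $m_1,m_2$ be positive integers with $m_1\not\equiv m_2\pmod p$. Then for no width $d\ge1$ and no $W\in\mathbb{R}^{d\times p}$, $V\in\mathbb{R}^{p\times d}$ does the ReLU network $s^\theta(x)=V\,\mathrm{ReLU}(Wx)$ satisfy $h_\theta(x)=y(x)$ for all $x\in\mathcal{X}_{m_1}\cup\mathcal{X}_{m_2}$.
   Context: Let $[p]=\{0,1,\dots,p-1\}$ and, for an integer $m\ge1$, $\mathcal{X}_m=\{x\in\{0,1,\dots,m\}^p:\ \|x\|_1=m\}$, with coordinates of $x$ indexed by $[p]$. The label of $x$ is $y(x)=(\sum_{r\in[p]} r\,x_r)\bmod p\in[p]$. $\mathrm{ReLU}(t)=\max\{0,t\}$ is applied entrywise. For a score vector $s^\theta(x)\in\mathbb{R}^p$ with coordinates indexed by $[p]$, the predictor is $h_\theta(x)=\ell$ if $s^\theta_\ell(x)>s^\theta_k(x)$ for all $k\ne\ell$, and $h_\theta(x)=\bot$ (invalid, never equal to a label) otherwise. *)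

(* Defs.v *)
From HB Require Import structures.
From mathcomp Require Import all_boot all_order all_algebra.
From mathcomp Require Import reals.
Set Implicit Arguments. Unset Strict Implicit. Unset Printing Implicit Defensive.
Import Order.TTheory GRing.Theory Num.Theory.
Local Open Scope ring_scope.

(* x \in X_m  <=>  ||x||_1 = m  (coordinates are then automatically <= m). *)
Definition inX (p m : nat) (x : {ffun 'I_p -> nat}) : bool :=
  (\sum_(r < p) x r)%N == m.

Definition label (p : nat) (x : {ffun 'I_p -> nat}) : nat :=
  ((\sum_(r < p) r * x r) %% p)%N.

Definition relu (R : realType) (t : R) : R := Num.max 0 t.

Definition score (R : realType) (p d : nat) (W : 'M[R]_(d, p)) (V : 'M[R]_(p, d))
  (x : {ffun 'I_p -> nat}) : 'cV[R]_p :=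
  V *m map_mx (@relu R) (W *m \col_(r < p) ((x r)%:R : R)).

(* h_theta(x) = Some l if s_l > s_k for all k <> l, None (= invalid) otherwise *)
Definition predict (R : realType) (p : nat) (s : 'cV[R]_p) : option 'I_p :=
  [pick l : 'I_p | [forall k : 'I_p, (k != l) ==> (s k 0 < s l 0)]].

(* Main.v *)
Require Import Defs.
From HB Require Import structures.
From mathcomp Require Import all_boot all_order all_algebra.
From mathcomp Require Import reals.
Import Order.TTheory GRing.Theory Num.Theory.
Local Open Scope ring_scope.

Lemma relu_scale (R : realType) (c t : R) : 0 <= c -> relu (c * t) = c * relu t.
Proof.
move=> c0; rewrite /relu; case: (leP 0 t) => t0.
- rewrite !max_r //; exact: mulr_ge0.
- rewrite !max_l ?mulr0 //; exact: mulr_ge0_le0 (ltW t0).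
Qed.

Lemma score_scale (R : realType) (p d : nat) (W : 'M[R]_(d, p)) (V : 'M[R]_(p, d))
  (x : {ffun 'I_p -> nat}) (m : nat) :
  score W V [ffun r => (m * x r)%N] = m%:R *: score W V x.
Proof.
rewrite /score.
have -> : (\col_(r < p) (([ffun r => (m * x r)%N] r)%:R : R))
          = m%:R *: \col_(r < p) ((x r)%:R : R).
  by apply/matrixP => i j; rewrite !mxE ffunE natrM.
rewrite scalemxAr; congr (V *m _); rewrite -scalemxAr.
apply/matrixP => i j; rewrite !mxE relu_scale //.
Qed.

Lemma predict_scale (R : realType) (p : nat) (s : 'cV[R]_p) (c : R) :
  0 < c -> predict (c *: s) = predict s.
Proof.
move=> c0; rewrite /predict; apply: eq_pick => l /=.
apply: eq_forallb => k; by rewrite !mxE ltr_pM2l.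
Qed.

Theorem mainTheorem4 (R : realType) (p m1 m2 : nat) :
  (2 <= p)%N -> (0 < m1)%N -> (0 < m2)%N -> (m1 %% p != m2 %% p)%N ->
  ~ (exists (d : nat) (W : 'M[R]_(d, p)) (V : 'M[R]_(p, d)),
       (1 <= d)%N /\
       forall x : {ffun 'I_p -> nat}, inX m1 x || inX m2 x ->
         omap val (predict (score W V x)) = Some (label x)).
Proof.
move=> p2 m1p m2p neq [d [W [V [_ H]]]].
have lt1p : (1 < p)%N by [].
pose one := Ordinal lt1p.
pose e : {ffun 'I_p -> nat} := [ffun r => (r == one : nat)].
have em : forall m, [ffun r => (m * e r)%N] = [ffun r => if r == one then m else 0%N].
  by move=> m; apply/ffunP => r; rewrite !ffunE; case: (r == one); rewrite ?muln1 ?muln0.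
have sumE : forall m, (\sum_(r < p) [ffun r => (m * e r)%N] r)%N = m.
  move=> m; rewrite em (bigD1 one) //= ffunE eqxx big1 ?addn0 //.
  by move=> i /negbTE hi; rewrite ffunE hi.
have labE : forall m, label [ffun r => (m * e r)%N] = (m %% p)%N.
  move=> m; rewrite /label em (bigD1 one) //= ffunE eqxx big1 ?addn0 ?mul1n //.
  by move=> i /negbTE hi; rewrite ffunE hi muln0.
have key : forall m, (0 < m)%N -> inX m1 [ffun r => (m * e r)%N] || inX m2 [ffun r => (m * e r)%N] ->
    omap val (predict (score W V e)) = Some (m %% p)%N.
  move=> m mp hx; rewrite -labE -(@predict_scale R p (score W V e) m%:R); last by rewrite ltr0n.
  rewrite -score_scale; apply: H; exact: hx.
have h1 : omap val (predict (score W V e)) = Some (m1 %% p)%N.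
  by apply: key m1p _; rewrite /inX sumE eqxx.
have h2 : omap val (predict (score W V e)) = Some (m2 %% p)%N.
  by apply: key m2p _; rewrite /inX sumE eqxx orbT.
by move: neq; rewrite h1 in h2; case: h2 => ->; rewrite eqxx.
Qed.
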